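(* Let $h,w\ge 4$ and $G=C_w(U)\sqcap C_h$ with $U=\{i,j\}$, $i\ne j$. (1) If $i$ and $j$ are adjacent in $C_w$, then $Z(G)\le h$. (2) If $i$ and $j$ are not adjacent in $C_w$, then $Z(G)\le 2h$.
   Context: All graphs are finite, simple and undirected. Zero forcing: given a graph $G$ and a set $S\subseteq V(G)$ of initially filled vertices, the color change rule says that if a filled vertex $v$ has exactly one unfilled neighbor $u$, then $v$ forces $u$ to become filled. $S$ is a zero forcing set if repeatedly applying this rule eventually fills every vertex of $G$. The zero forcing number $Z(G)$ is the minimum cardinality of a zero forcing set of $G$. The cycle $C_n$ ($n\ge3$) has vertex set $\{1,\dots,n\}$ and edges $\{k,k+1\}$ for $1\le k\le n-1$ together with $\{n,1\}$. Generalized hierarchical product: for graphs $W,H$ and $U\subseteq V(W)$ (the root set), $W(U)\sqcap H$ is the graph with vertex set $V(W)\times V(H)$ in which $(x_1,y_1)$ and $(x_2,y_2)$ are adjacent iff either ($x_1=x_2\in U$ and $y_1y_2\in E(H)$) or ($y_1=y_2$ and $x_1x_2\in E(W)$). *)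

(* Defs.v *)
From mathcomp Require Import all_boot all_order.
Set Implicit Arguments. Unset Strict Implicit. Unset Printing Implicit Defensive.

(* Cycle C_n on vertices 'I_n; paper's vertex k (1<=k<=n) is ordinal k-1.
   Edges {k,k+1} and {n,1}, i.e. x ~ y iff y = x+1 mod n or x = y+1 mod n. *)
Definition cycle_adj (n : nat) : rel 'I_n :=
  fun x y => ((x.+1 %% n) == y) || ((y.+1 %% n) == x).

Definition hprod_adj (A B : finType) (adjW : rel A) (U : {set A}) (adjH : rel B)
  : rel (A * B) :=
  fun p q =>
    ((p.1 == q.1) && (p.1 \in U) && adjH p.2 q.2)
    || ((p.2 == q.2) && adjW p.1 q.1).

Definition force_step (T : finType) (adj : rel T) (F : {set T}) : {set T} :=
  F :|: [set u | [exists v, [&& v \in F, adj v u, u \notin F &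
                   [forall x, (adj v x && (x != u)) ==> (x \in F)]]]].

(* The set of vertices filled after repeatedly applying the rule
   (#|T| rounds suffice, since each productive round fills a new vertex). *)
Definition force_closure (T : finType) (adj : rel T) (S : {set T}) : {set T} :=
  iter #|T| (force_step adj) S.

Definition zero_forcing_set (T : finType) (adj : rel T) (S : {set T}) : bool :=
  force_closure adj S == [set: T].

(* Zero forcing number: minimum size of a zero forcing set
   ([set: T] is always one, so #|T| is a valid upper default). *)
Definition zero_forcing_number (T : finType) (adj : rel T) : nat :=
  \big[minn/#|T|]_(S : {set T} | zero_forcing_set adj S) #|S|.
Arguments cycle_adj n : clear implicits.

(* Main.v *)
Require Import Defs.
From mathcomp Require Import all_boot all_order zify.
Set Implicit Arguments. Unset Strict Implicit. Unset Printing Implicit Defensive.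


Lemma zfn_le (T : finType) (adj : rel T) (S : {set T}) :
  zero_forcing_set adj S -> zero_forcing_number adj <= #|S|.
Proof.
move=> HS; rewrite /zero_forcing_number.
have gen : forall r : seq {set T}, S \in r ->
  \big[minn/#|T|]_(X <- r | zero_forcing_set adj X) #|X| <= #|S|.
  elim=> [//|a r IH]; rewrite inE big_cons => /orP[/eqP <-|Hr].
    by rewrite HS geq_minl.
  case: ifP => _; last exact: IH.
  exact: leq_trans (geq_minr _ _) (IH Hr).
exact: gen (mem_index_enum S).
Qed.

Lemma iter_ext (T : finType) (adj : rel T) (S : {set T}) n :
  S \subset iter n (force_step adj) S.
Proof.
elim: n => [|n IH] //=; apply: subset_trans IH _; exact: subsetUl.
Qed.

Lemma fc_fix (T : finType) (adj : rel T) (S : {set T}) :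
  force_step adj (force_closure adj S) = force_closure adj S.
Proof.
set f := force_step adj.
have ext : forall F : {set T}, F \subset f F by move=> F; exact: subsetUl.
have H : forall n, f (iter n f S) = iter n f S \/ n <= #|iter n f S|.
  elim=> [|n IH]; first by right.
  case: (eqVneq (f (iter n f S)) (iter n f S)) => E.
    by left; rewrite /= E E.
  right; case: IH => [E'|IH]; first by rewrite E' eqxx in E.
  rewrite /=; apply: leq_trans (_ : #|iter n f S| < _).
    by [].
  apply: proper_card; rewrite properEneq eq_sym E ext.
  done.
rewrite /force_closure; case: (H #|T|) => // Hc.
have E : iter #|T| f S = [set: T].
  by apply/eqP; rewrite eqEcard subsetT cardsT Hc.
by rewrite E; apply/eqP; rewrite eqEsubset subsetT ext.
Qed.

Lemma fc_rule (T : finType) (adj : rel T) (S : {set T}) v u :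
  v \in force_closure adj S -> adj v u ->
  (forall x, adj v x -> x != u -> x \in force_closure adj S) ->
  u \in force_closure adj S.
Proof.
move=> Hv Hvu Hx; rewrite -fc_fix; apply/setUP.
case: (boolP (u \in force_closure adj S)) => Hu; first by left.
right; rewrite inE; apply/existsP; exists v; rewrite Hv Hvu Hu /=.
apply/forallP=> x; apply/implyP=> /andP[a b]; exact: Hx.
Qed.

Lemma fc_sub (T : finType) (adj : rel T) (S : {set T}) x :
  x \in S -> x \in force_closure adj S.
Proof. by move=> Hx; apply: (subsetP (iter_ext adj S #|T|)). Qed.


Definition pos n (a : 'I_n.+1) k : 'I_n.+1 := inord ((a + k) %% n.+1).

Lemma val_pos n (a : 'I_n.+1) k : (pos a k : nat) = (a + k) %% n.+1.
Proof. by rewrite /pos inordK // ltn_pmod. Qed.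

Lemma pos_pos n (a : 'I_n.+1) k l : pos (pos a k) l = pos a (k + l).
Proof. by apply: val_inj; rewrite /= !val_pos modnDml addnA. Qed.

Lemma pos0 n (a : 'I_n.+1) : pos a 0 = a.
Proof. by apply: val_inj; rewrite /= val_pos addn0 modn_small. Qed.

Lemma posNk n (a : 'I_n.+1) k : pos a (k + n.+1) = pos a k.
Proof. by apply: val_inj; rewrite /= !val_pos addnA modnDr. Qed.

Lemma posN n (a : 'I_n.+1) : pos a n.+1 = a.
Proof. by have := posNk a 0; rewrite add0n pos0. Qed.

Lemma pos_eq n (a : 'I_n.+1) k l : k <= n -> l <= n -> (pos a k == pos a l) = (k == l).
Proof.
move=> hk hl; apply/eqP/eqP => [E|->//].
have := congr1 val E; rewrite /= !val_pos => /eqP; rewrite eqn_modDl !modn_small //.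
by move/eqP.
Qed.

Lemma cyc_adjE n (x y : 'I_n.+1) :
  cycle_adj n.+1 x y = (y == pos x 1) || (y == pos x n).
Proof.
rewrite /cycle_adj; congr orb.
  by apply/eqP/eqP => [E|->]; [apply: val_inj; rewrite /= val_pos addn1 | rewrite val_pos addn1].
apply/eqP/eqP => [E|->].
  apply: val_inj; rewrite /= val_pos -E modnDml addSn -addnS modnDr modn_small //.
rewrite val_pos -addn1 modnDml -addnA addn1 modnDr modn_small //.
Qed.

Lemma pos_cover n (a x : 'I_n.+1) : exists k, 0 < k <= n.+1 /\ x = pos a k.
Proof.
have hx : x < n.+1 by [].
have E := divn_eq (a + n.+1 - x) n.+1.
have hr : (a + n.+1 - x) %% n.+1 < n.+1 by rewrite ltn_pmod.
move: E hr; set q := _ %/ _; set r := _ %% _ => E hr.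
exists (n.+1 - r); split.
  by rewrite subn_gt0 hr leq_subr.
apply: val_inj; rewrite /= val_pos.
have -> : a + (n.+1 - r) = q * n.+1 + x by lia.
by rewrite modnMDl modn_small.
Qed.


Definition Gr n m (U : {set 'I_n.+1}) := hprod_adj (cycle_adj n.+1) U (cycle_adj m.+1).

Arguments Gr {n} m U.

Lemma GrE n m U (p q : 'I_n.+1 * 'I_m.+1) :
  Gr m U p q =
  ((q.1 == p.1) && (p.1 \in U) && ((q.2 == pos p.2 1) || (q.2 == pos p.2 m)))
  || ((q.2 == p.2) && ((q.1 == pos p.1 1) || (q.1 == pos p.1 n))).
Proof. by rewrite /Gr /hprod_adj !cyc_adjE (eq_sym p.1) (eq_sym p.2). Qed.

Section R.
Lemma ruleU n m U S (x : 'I_n.+1) (y : 'I_m.+1) u :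
  let C := force_closure (Gr m U) S in
  let l := [:: (pos x 1, y); (pos x n, y); (x, pos y 1); (x, pos y m)] in
  x \in U -> (x, y) \in C -> u \in l -> (forall q, q \in l -> q != u -> q \in C) ->
  u \in C.
Proof.
move=> C l xU xC ul H; apply: (fc_rule xC).
  move: ul; rewrite /l !inE GrE /= xU => /or4P[] /eqP -> /=; rewrite !eqxx ?orbT //.
move=> [q1 q2]; rewrite GrE /= => Hq qu; apply: H qu.
rewrite /l !inE; case/orP: Hq => [/andP[/andP[/eqP-> _] /orP[]/eqP->]|/andP[/eqP-> /orP[]/eqP->]];
  rewrite ?eqxx ?orbT //.
Qed.

Lemma ruleN n m U S (x : 'I_n.+1) (y : 'I_m.+1) :
  let C := force_closure (Gr m U) S in
  x \notin U -> (x, y) \in C -> (pos x n, y) \in C -> (pos x 1, y) \in C.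
Proof.
move=> C xU xC pC; apply: (fc_rule xC); first by rewrite GrE /= !eqxx ?orbT.
move=> [q1 q2]; rewrite GrE /= (negbTE xU) andbF /= => /andP[/eqP -> /orP[]/eqP->] //.
by rewrite eqxx.
Qed.

Lemma ruleN' n m U S (x : 'I_n.+1) (y : 'I_m.+1) :
  let C := force_closure (Gr m U) S in
  x \notin U -> (x, y) \in C -> (pos x 1, y) \in C -> (pos x n, y) \in C.
Proof.
move=> C xU xC pC; apply: (fc_rule xC); first by rewrite GrE /= !eqxx ?orbT.
move=> [q1 q2]; rewrite GrE /= (negbTE xU) andbF /= => /andP[/eqP -> /orP[]/eqP->] //.
by rewrite eqxx.
Qed.
End R.


Lemma arcF n m U S (a : 'I_n.+1) (y : 'I_m.+1) s t :
  let C := force_closure (Gr m U) S in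
  (pos a s, y) \in C -> (pos a s.+1, y) \in C ->
  (forall k, s < k -> k < t -> pos a k \notin U) ->
  forall k, s <= k -> k <= t -> (pos a k, y) \in C.
Proof.
move=> C h0 h1 hU.
have R : forall d, s + d < t \/ d = 0 ->
    (pos a (s + d), y) \in C /\ (pos a (s + d).+1, y) \in C.
  elim=> [|d IH] H; first by rewrite addn0.
  have [c1 c2] : (pos a (s + d), y) \in C /\ (pos a (s + d).+1, y) \in C.
    by apply: IH; left; case: H => H; lia.
  have Ht : s + d.+1 < t by case: H.
  split; first by rewrite addnS.
  have xU : pos a (s + d).+1 \notin U by apply: hU; lia.
  have E1 : pos (pos a (s + d).+1) 1 = pos a (s + d.+1).+1.
    by rewrite pos_pos addn1 addnS.
  have E2 : pos (pos a (s + d).+1) n = pos a (s + d).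
    by rewrite pos_pos -(posNk a (s + d)); congr pos; lia.
  have := ruleN xU c2; rewrite E1 E2; exact.
move=> k hk hkt.
case: (eqVneq k s) => [->|ne]; first by case: (R 0 (or_intror erefl)); rewrite addn0.
have hlt : s + (k - s).-1 < t by lia.
have [_ c] := R _ (or_introl hlt).
have E : (s + (k - s).-1).+1 = k by lia.
by rewrite E in c.
Qed.

Lemma arcB n m U S (a : 'I_n.+1) (y : 'I_m.+1) s t :
  let C := force_closure (Gr m U) S in
  (pos a t, y) \in C -> (pos a t.+1, y) \in C ->
  (forall k, s < k -> k <= t -> pos a k \notin U) ->
  forall k, s <= k -> k <= t.+1 -> (pos a k, y) \in C.
Proof.
move=> C h0 h1 hU.
have R : forall d, d <= t - s ->
    (pos a (t - d), y) \in C /\ (pos a (t - d).+1, y) \in C.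
  elim=> [|d IH] H; first by rewrite subn0.
  have [c1 c2] : (pos a (t - d), y) \in C /\ (pos a (t - d).+1, y) \in C.
    by apply: IH; lia.
  have xU : pos a (t - d) \notin U by apply: hU; lia.
  have E1 : pos (pos a (t - d)) 1 = pos a (t - d).+1.
    by rewrite pos_pos addn1.
  have E2 : pos (pos a (t - d)) n = pos a (t - d.+1).
    by rewrite pos_pos -(posNk a (t - d.+1)); congr pos; lia.
  have E3 : (t - d.+1).+1 = t - d by lia.
  have := ruleN' xU c1; rewrite E1 E2 E3 => H3; split; [exact: H3 c2|exact: c1].
move=> k hk hkt.
case: (eqVneq k t.+1) => [->|ne].
  by case: (R 0 (leq0n _)); rewrite subn0.
have hlt : t - k <= t - s by lia.
have [c _] := R _ hlt.
have E : t - (t - k) = k by lia.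
by rewrite E in c.
Qed.


Lemma case2 n m (i j : 'I_n.+1) : 3 <= n -> 3 <= m -> i != j ->
  ~~ cycle_adj n.+1 i j -> zero_forcing_number (Gr m [set i; j]) <= 2 * m.+1.
Proof.
move=> hn hm ij nadj.
pose g (p : 'I_2 * 'I_m.+1) := (pos i p.1, p.2).
pose S := [set g p | p in [set: 'I_2 * 'I_m.+1]].
have cS : #|S| <= 2 * m.+1.
  by apply: leq_trans (leq_imset_card _ _) _; rewrite cardsT card_prod !card_ord.
apply: leq_trans (zfn_le _) cS.
rewrite /zero_forcing_set; set C := force_closure _ S.
have S0 : forall y, (i, y) \in C.
  move=> y; apply: fc_sub; apply/imsetP; exists (ord0, y); rewrite ?inE //.
  by rewrite /g /= pos0.
have S1 : forall y, (pos i 1, y) \in C.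
  move=> y; apply: fc_sub; apply/imsetP; by exists (ord_max, y); rewrite ?inE.
have [k [hk jk]] := pos_cover i j.
have k1 : k != 1 by apply: contraNneq nadj => e; rewrite cyc_adjE jk e eqxx.
have kn : k != n by apply: contraNneq nadj => e; rewrite cyc_adjE jk e eqxx orbT.
have kN : k != n.+1 by apply: contraNneq ij => e; rewrite jk e posN.
have Ui : forall l, 0 < l <= n -> l != k -> pos i l \notin [set i; j].
  move=> l hl lk.
  have hl' : l <= n by lia.
  have kn' : k <= n by lia.
  have E0 := pos_eq i hl' (leq0n n); rewrite pos0 in E0.
  rewrite !inE jk E0 pos_eq //; lia.
rewrite eqEsubset subsetT /=; apply/subsetP => -[x y] _.
have [e [he xe]] := pos_cover i x; rewrite xe.
case: (leqP e k) => hek.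
  apply: (arcF (s := 0) (t := k)) => //; first by rewrite pos0.
  move=> l l0 lk; apply: Ui; lia.
have Cn : (pos i n, y) \in C.
  apply: (ruleU (x := i) (y := y)); rewrite ?inE ?eqxx ?orbT //.
  move=> q; rewrite !inE => /or4P[]/eqP-> ne //.
  by rewrite eqxx in ne.
apply: (arcB (s := k) (t := n)) => //; try lia.
  by rewrite posN.
move=> l l0 lk; apply: Ui; lia.
Qed.


Lemma val_posv m (a : 'I_m.+1) k : (pos a k : nat) = (a + k) %% m.+1.
Proof. exact: val_pos. Qed.

Lemma case1 n m (i : 'I_n.+1) : 3 <= n -> 3 <= m ->
  zero_forcing_number (Gr m [set i; pos i 1]) <= m.+1.
Proof.
move=> hn hm.
pose g (y : 'I_m.+1) : 'I_n.+1 * 'I_m.+1 :=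
  if y <= m - 2 then (i, y) else if y == m - 1 :> nat then (pos i n, ord0)
  else (pos i n, ord_max).
pose S := [set g y | y in [set: 'I_m.+1]].
have cS : #|S| <= m.+1.
  by apply: leq_trans (leq_imset_card _ _) _; rewrite cardsT card_ord.
apply: leq_trans (zfn_le _) cS.
rewrite /zero_forcing_set; set C := force_closure _ S.
have Si : forall y : 'I_m.+1, y <= m - 2 -> (i, y) \in C.
  move=> y hy; apply: fc_sub; apply/imsetP; exists y; rewrite ?inE //.
  by rewrite /g hy.
have S0 : (pos i n, ord0) \in C.
  apply: fc_sub; apply/imsetP; exists (inord (m - 1)); rewrite ?inE //.
  rewrite /g inordK; last by lia.
  by rewrite ifF ?eqxx //; apply/negbTE; rewrite -ltnNge; lia.
have SM : (pos i n, ord_max) \in C.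
  apply: fc_sub; apply/imsetP; exists ord_max; rewrite ?inE //.
  rewrite /g /= ifF; last by apply/negbTE; rewrite -ltnNge; lia.
  by rewrite ifF //; apply/negbTE; lia.
have iU : i \in [set i; pos i 1] by rewrite !inE eqxx.
have jU : pos i 1 \in [set i; pos i 1] by rewrite !inE eqxx orbT.
have row : forall y, (i, y) \in C -> (pos i n, y) \in C -> forall x, (x, y) \in C.
  move=> y c1 c2 x.
  have [e [he ->]] := pos_cover i x.
  apply: (arcB (s := 1) (t := n)) => //; try lia.
    by rewrite posN.
  move=> l l1 ln.
  have hl' : l <= n by lia.
  have E0 := pos_eq i hl' (leq0n n); rewrite pos0 in E0.
  rewrite !inE E0 pos_eq //; lia.
have R0 : forall x, (x, ord0) \in C by apply: row => //; apply: Si; rewrite /=; lia.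
have pm0 : pos (ord0 : 'I_m.+1) m = ord_max.
  by apply: val_inj; rewrite /= val_pos add0n modn_small.
have CiM : (i, ord_max) \in C.
  rewrite -pm0; apply: (ruleU (x := i) (y := ord0)) => //.
    by rewrite !inE eqxx !orbT.
  move=> q; rewrite !inE => /or4P[]/eqP-> ne //.
    by apply: Si; rewrite val_pos add0n modn_small //; lia.
  by rewrite eqxx in ne.
have RM : forall x, (x, ord_max) \in C by apply: row.
have pM1 : pos (ord_max : 'I_m.+1) 1 = ord0.
  by apply: val_inj; rewrite /= val_pos addn1 modnn.
have CiM1 : (i, pos (ord_max : 'I_m.+1) m) \in C.
  apply: (ruleU (x := i) (y := ord_max)) => //.
    by rewrite !inE eqxx !orbT.
  move=> q; rewrite !inE => /or4P[]/eqP-> ne //.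
    by rewrite pM1 R0.
  by rewrite eqxx in ne.
have col : forall y, (i, y) \in C.
  move=> y.
  case: (leqP y (m - 2)) => hy; first exact: Si.
  case: (eqVneq (y : nat) m) => ym.
    by have -> : y = ord_max by apply: val_inj.
  have -> : y = pos (ord_max : 'I_m.+1) m; last exact: CiM1.
  apply: val_inj; rewrite /= val_pos.
  have -> : m + m = (m - 1) + m.+1 by lia.
  rewrite modnDr modn_small; [have := ltn_ord y; lia | lia].
have Q : forall k, k <= m - 1 -> forall y : 'I_m.+1, (y <= k \/ y = m :> nat) ->
    forall x, (x, y) \in C.
  elim=> [|k IH] hk y hy.
    case: hy => hy.
      by have -> : y = ord0 by apply: val_inj; rewrite /=; lia.
    by have -> : y = ord_max by apply: val_inj.
  case: (leqP y k) => hyk; first by apply: IH; [lia | left].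
  case: hy => hy; last by apply: IH; [lia | right].
  have ey : y = pos (inord k : 'I_m.+1) 1.
    by apply: val_inj; rewrite /= val_pos inordK ?modn_small; lia.
  have rk : forall x, (x, (inord k : 'I_m.+1)) \in C.
    by apply: IH; [lia | left; rewrite inordK; lia].
  have Cj : (pos i 1, y) \in C.
    rewrite ey; apply: (ruleU (x := pos i 1) (y := inord k)) => //.
      by rewrite !inE eqxx !orbT.
    move=> q; rewrite !inE => /or4P[]/eqP-> ne //.
      by rewrite eqxx in ne.
    apply: IH; first lia.
    rewrite val_pos inordK; last lia.
    case: (posnP k) => [->|kp]; first by right; rewrite add0n modn_small.
    left; have -> : k + m = k.-1 + m.+1 by lia.
    rewrite modnDr modn_small; lia.
  apply: row => //.
  apply: (ruleU (x := i) (y := y)) => //.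
    by rewrite !inE eqxx !orbT.
  move=> q; rewrite !inE => /or4P[]/eqP-> ne; [exact: Cj | by rewrite eqxx in ne | exact: col | exact: col].
rewrite eqEsubset subsetT /=; apply/subsetP => -[x y] _.
apply: (Q (m - 1)) => //.
case: (eqVneq (y : nat) m) => ym; [right | left] => //.
have := ltn_ord y; lia.
Qed.

Theorem mainTheorem5 (w h : nat) (i j : 'I_w) :
  4 <= w -> 4 <= h -> i != j ->
  let G := hprod_adj (cycle_adj w) [set i; j] (cycle_adj h) in
  (cycle_adj w i j -> zero_forcing_number G <= h) /\
  (~~ cycle_adj w i j -> zero_forcing_number G <= 2 * h).
Proof.
case: w i j => [|n] i j hw; first by case: i.
case: h => [//|m] hh ij G; split.
  rewrite cyc_adjE => /orP[]/eqP E.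
    rewrite /G E; exact: (case1 i).
  have Ei : i = pos j 1 by rewrite E pos_pos addn1 posN.
  rewrite /G setUC Ei; exact: (case1 j).
move=> nadj; exact: case2.
Qed.
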